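(* Let $\Gamma$ be a totally ordered additive abelian group, $E$ a finite set, and $\nu_{\mathsf{P}}\colon\Delta_E^r\to\overline{\Gamma}$ an $M$-convex function of rank $r$. Let $\widetilde{\nu}_{\mathsf{P}}\colon\Delta_E^{\leq r}\to\overline{\Gamma}$ be $\widetilde{\nu}_{\mathsf{P}}(\alpha)=\min\{\nu_{\mathsf{P}}(\beta)\mid\beta\in\Delta_E^r,\ \alpha_e\leq\beta_e\ \forall e\in E\}$. Let $Q$ be a finite set disjoint from $E$ and $\widetilde{E}=Q\sqcup E$, and identify $\mathbb{Z}^{\widetilde{E}}=\mathbb{Z}^Q\times\mathbb{Z}^E$. Define $\nu_{\widetilde{\mathsf{P}}}\colon\Delta_{\widetilde{E}}^r\to\overline{\Gamma}$ by $\nu_{\widetilde{\mathsf{P}}}((\alpha_Q,\alpha))=\widetilde{\nu}_{\mathsf{P}}(\alpha)$ for every $(\alpha_Q,\alpha)\in\Delta^r_{\widetilde{E}}$ with $\alpha\in\Delta_E^{\leq r}$ and $\alpha_Q\in\Delta_Q^{r-|\alpha|}$. Then $\nu_{\widetilde{\mathsf{P}}}$ is an $M$-convex function of rank $r$ on $\widetilde{E}$.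
   Context: $\overline{\Gamma}=\Gamma\sqcup\{\infty\}$ with $\infty$ larger than every element of $\Gamma$. For $s\in E$, $e_s$ is the standard basis vector of $\mathbb{Z}^E$. $|\alpha|=\sum_e\alpha_e$, $\Delta_E^k=\{\alpha\in\mathbb{Z}^E_{\ge0}\mid|\alpha|=k\}$, $\Delta_E^{\leq r}=\{\alpha\in\mathbb{Z}^E_{\ge 0}\mid |\alpha|\leq r\}$. An $M$-convex function of rank $r$ on $E$ is a map $\nu\colon\Delta_E^r\to\overline{\Gamma}$, not identically $\infty$, such that for all $\alpha,\beta\in\Delta_E^r$ and every $s\in E$ with $\alpha_s>\beta_s$ there is $t\in E$ with $\beta_t>\alpha_t$ and $\nu(\alpha)+\nu(\beta)\geq\nu(\alpha-e_s+e_t)+\nu(\beta-e_t+e_s)$. *)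

(* Defs.v *)
From mathcomp Require Import all_boot all_order all_algebra.
Set Implicit Arguments. Unset Strict Implicit. Unset Printing Implicit Defensive.
Import GRing.Theory.
Local Open Scope ring_scope.

Definition ordered_group (G : zmodType) (le : rel G) : Prop :=
  [/\ reflexive le, antisymmetric le, transitive le, total le
    & forall x y z : G, le x y -> le (x + z) (y + z)].

(* Gamma-bar = Gamma ⊔ {oo}, encoded as option G with None = oo. *)
Definition gbar (G : zmodType) := option G.

Definition addbar (G : zmodType) (x y : option G) : option G :=
  match x, y with Some a, Some b => Some (a + b) | _, _ => None end.

Definition lebar (G : zmodType) (le : rel G) (x y : option G) : bool :=
  match x, y with
  | _, None => true
  | None, Some _ => false
  | Some a, Some b => le a b
  end.

Definition minbar (G : zmodType) (le : rel G) (x y : option G) : option G :=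
  if lebar le x y then x else y.

Definition absv (E : finType) (a : {ffun E -> nat}) : nat := (\sum_(e : E) a e)%N.

Definition inDelta (E : finType) (k : nat) (a : {ffun E -> nat}) : bool :=
  absv a == k.

(* M-convex function of rank r on E (values outside Delta_E^r are irrelevant) *)
Definition Mconvex (G : zmodType) (le : rel G) (E : finType) (r : nat)
    (nu : {ffun E -> nat} -> option G) : Prop :=
  (exists a, inDelta r a /\ nu a <> None) /\
  forall a b : {ffun E -> nat}, inDelta r a -> inDelta r b ->
  forall s : E, (b s < a s)%N ->
  exists t : E, (a t < b t)%N /\
    lebar le
      (addbar (nu [ffun e => a e - (e == s) + (e == t)]%N)
              (nu [ffun e => b e - (e == t) + (e == s)]%N))
      (addbar (nu a) (nu b)).

Definition Delta_seq (E : finType) (r : nat) : seq {ffun E -> nat} :=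
  filter (inDelta r)
    (map (fun f : {ffun E -> 'I_r.+1} => [ffun e => nat_of_ord (f e)])
       (enum {: {ffun E -> 'I_r.+1}})).

Definition nutilde (G : zmodType) (le : rel G) (E : finType) (r : nat)
    (nu : {ffun E -> nat} -> option G) (a : {ffun E -> nat}) : option G :=
  foldr (minbar le) None
    [seq nu b | b : {ffun E -> nat} <- Delta_seq E r & [forall e, (a e <= b e)%N]].

Definition nu_ext (G : zmodType) (le : rel G) (Q E : finType) (r : nat)
    (nu : {ffun E -> nat} -> option G) (x : {ffun (Q + E)%type -> nat}) : option G :=
  nutilde le r nu [ffun e => x (inr e)].

(* Main.v *)
Require Import Defs.
From mathcomp Require Import all_boot all_order all_algebra.
From mathcomp Require Import zify.
Set Implicit Arguments. Unset Strict Implicit. Unset Printing Implicit Defensive.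


Section Opt.
Variables (G : zmodType) (le : rel G) (HG : ordered_group le).
Local Notation lb := (lebar le).
Local Notation ad := (@addbar G).
Local Open Scope ring_scope.

Lemma lb_refl x : lb x x.
Proof. case: HG => rf _ _ _ _; case: x => //= a; exact: rf. Qed.

Lemma lb_trans x y z : lb x y -> lb y z -> lb x z.
Proof.
case: HG => _ _ tr _ _.
case: x => [a|]; case: y => [b|]; case: z => [c|] //=.
move=> h1 h2; exact: tr h1 h2.
Qed.

Lemma lb_None x : lb x None.
Proof. by case: x. Qed.

Lemma lb_total x y : lb x y \/ lb y x.
Proof.
case: HG => _ _ _ tt _.
case: x => [a|]; case: y => [b|] //=; try by [left|right].
by case/orP: (tt a b); [left|right].
Qed.

Lemma lb_NoneL y : lb None y -> y = None.
Proof. by case: y. Qed.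

Lemma le_addl (a b c : G) : le a b -> le (c + a) (c + b).
Proof. case: HG => _ _ _ _ tr h; rewrite ![c + _]GRing.addrC; exact: tr. Qed.

Lemma lb_add x1 y1 x2 y2 : lb x1 y1 -> lb x2 y2 -> lb (ad x1 x2) (ad y1 y2).
Proof.
case: HG => _ _ tr _ trr.
case: x1 => [a1|]; case: y1 => [b1|]; case: x2 => [a2|]; case: y2 => [b2|] //=.
move=> h1 h2; apply: (tr (b1 + a2)); first exact: trr.
exact: le_addl.
Qed.

Lemma ad_comm x y : ad x y = ad y x.
Proof. by case: x => [a|]; case: y => [b|] //=; rewrite GRing.addrC. Qed.

Lemma lb_cancel x y c : lb (ad x (Some c)) (ad y (Some c)) -> lb x y.
Proof.
case: HG => _ _ _ _ trr.
case: x => [a|]; case: y => [b|] //= h.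
have := trr _ _ (- c) h; by rewrite !GRing.addrK.
Qed.

Lemma ad_None x y : ad x y <> None -> exists a b, x = Some a /\ y = Some b.
Proof. case: x => [a|]; case: y => [b|] //= _; by exists a, b. Qed.

End Opt.

Ltac splitE := repeat (rewrite ?eqxx; match goal with
 | |- context [@eq_op ?T ?a ?b] => case: (@eqVneq T a b) => [?|?]; subst
 end).
Ltac clean := repeat match goal with H : ?T |- _ => lazymatch T with
  | is_true (leq _ _) => fail | (@eq nat _ _) => fail | _ => clear H end end.
Ltac pw := splitE; simpl; try (match goal with H : is_true (?a != ?a) |- _ => by rewrite eqxx in H end); clean; lia.

Lemma sum_lt (I : finType) (f g : I -> nat) i0 :
  (forall i, f i <= g i) -> f i0 < g i0 -> (\sum_i f i < \sum_i g i)%N.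
Proof.
move=> h h0; rewrite (bigD1 i0) //= [X in (_ < X)%N](bigD1 i0) //=.
have : (\sum_(i | i != i0) f i <= \sum_(i | i != i0) g i)%N by apply: leq_sum => i _; exact: h.
lia.
Qed.

Lemma sum_le (I : finType) (f g : I -> nat) :
  (forall i, f i <= g i) -> (\sum_i f i <= \sum_i g i)%N.
Proof. by move=> h; apply: leq_sum => i _; exact: h. Qed.

Lemma sum_eq1 (I : finType) (i0 : I) : (\sum_i (i == i0) = 1)%N.
Proof.
rewrite (bigD1 i0) //= eqxx big1 // => i /negbTE ->. done.
Qed.

Section Vec.
Variable E : finType.
Local Notation vec := {ffun E -> nat}.

Definition upd (a : vec) (s t : E) : vec := [ffun e => a e - (e == s) + (e == t)]%N.
Definition sm (a : vec) (s : E) : vec := [ffun e => a e - (e == s)]%N.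
Definition sp (a : vec) (s : E) : vec := [ffun e => a e + (e == s)]%N.
Definition vle (a b : vec) := forall e, a e <= b e.
Definition dist (A B : vec) := (\sum_e ((A e - B e) + (B e - A e)))%N.

Lemma absv_sp (a : vec) s : absv (sp a s) = (absv a).+1.
Proof. rewrite /absv; under eq_bigr do rewrite ffunE; by rewrite big_split /= sum_eq1 addn1. Qed.

Lemma absv_sm (a : vec) s : 0 < a s -> (absv (sm a s)).+1 = absv a.
Proof.
move=> h; rewrite /absv -addn1 -(sum_eq1 s) -big_split /=; apply: eq_bigr => e _.
rewrite ffunE; pw.
Qed.

Lemma absv_upd (a : vec) s t : 0 < a s -> absv (upd a s t) = absv a.
Proof.
move=> h; have <- := absv_sm h; rewrite -(absv_sp (sm a s) t); congr absv; apply/ffunP => e.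
by rewrite !ffunE.
Qed.

Lemma inDelta_upd r (a : vec) s t : inDelta r a -> 0 < a s -> inDelta r (upd a s t).
Proof. by rewrite /inDelta => ha h; rewrite absv_upd. Qed.

Lemma dist_A_lt (A B X : vec) u v : B u < A u -> A v < B v ->
  (forall e, X e = A e - (e == u) + (e == v))%N -> (dist X B < dist A B)%N.
Proof.
move=> h1 h2 hX; rewrite /dist; apply: (@sum_lt E _ _ u) => [e|]; rewrite hX.
  have := h1; have := h2; pw.
have := h1; have := h2; pw.
Qed.

Lemma dist_B_lt (A B Y : vec) u v : B u < A u -> A v < B v ->
  (forall e, Y e = B e - (e == v) + (e == u))%N -> (dist A Y < dist A B)%N.
Proof.
move=> h1 h2 hY; rewrite /dist; apply: (@sum_lt E _ _ u) => [e|]; rewrite hY.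
  have := h1; have := h2; pw.
have := h1; have := h2; pw.
Qed.

Lemma dist_both_le (A B X Y : vec) u v : B u < A u -> A v < B v ->
  (forall e, X e = A e - (e == u) + (e == v))%N ->
  (forall e, Y e = B e - (e == v) + (e == u))%N -> (dist X Y <= dist A B)%N.
Proof.
move=> h1 h2 hX hY; rewrite /dist; apply: sum_le => e; rewrite hX hY.
have := h1; have := h2; pw.
Qed.

Lemma le_absv (a : vec) e : a e <= absv a.
Proof. rewrite /absv (bigD1 e) //=; exact: leq_addr. Qed.

End Vec.

Section Nut.
Variables (G : zmodType) (le : rel G) (HG : ordered_group le).
Local Notation lb := (lebar le).
Local Notation ad := (@addbar G).

Lemma fold_le (T : eqType) (f : T -> option G) (l : seq T) x : x \in l ->
  lb (foldr (minbar le) None [seq f y | y <- l]) (f x).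
Proof.
elim: l => // a l IH; rewrite in_cons => /orP [/eqP ->|hx]; rewrite /= /minbar; case: ifP => h.
- exact: lb_refl.
- by case: (lb_total HG (f a) (foldr (minbar le) None [seq f y | y <- l])) => //; rewrite h.
- apply: (lb_trans HG h); exact: IH.
- exact: IH.
Qed.

Lemma fold_att (T : eqType) (f : T -> option G) (l : seq T) :
  foldr (minbar le) None [seq f y | y <- l] <> None ->
  exists2 x, x \in l & foldr (minbar le) None [seq f y | y <- l] = f x.
Proof.
elim: l => //= a l IH; rewrite /minbar; case: ifP => h hn.
- by exists a; rewrite ?mem_head.
- have [x hx ->] := IH hn; exists x => //; by rewrite in_cons hx orbT.
Qed.

Variables (E : finType) (r : nat) (nu : {ffun E -> nat} -> option G).
Local Notation vec := {ffun E -> nat}.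
Local Notation nt := (nutilde le r nu).

Lemma mem_Delta (A : vec) : inDelta r A -> A \in Delta_seq E r.
Proof.
move=> hA; rewrite /Delta_seq mem_filter hA /=.
have hle : forall e, A e < r.+1.
  move=> e; rewrite ltnS; have := le_absv A e; by move: hA; rewrite /inDelta => /eqP ->.
have -> : A = [ffun e => nat_of_ord ([ffun e => (inord (A e) : 'I_r.+1)] e)].
  by apply/ffunP => e; rewrite !ffunE inordK.
apply: map_f; exact: mem_enum.
Qed.

Lemma N1 (c A : vec) : inDelta r A -> vle c A -> lb (nt c) (nu A).
Proof.
move=> hA hc; rewrite /nutilde; apply: fold_le.
rewrite mem_filter mem_Delta // andbT; by apply/forallP.
Qed.

Lemma N2 (c : vec) : nt c <> None ->
  exists A, [/\ inDelta r A, vle c A & lb (nu A) (nt c)].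
Proof.
rewrite /nutilde => /fold_att [A]; rewrite mem_filter => /andP [/forallP hc hD] ->.
exists A; split => //; last exact: lb_refl.
by move: hD; rewrite mem_filter => /andP [].
Qed.

End Nut.

Section Main.
Variables (G : zmodType) (le : rel G) (HG : ordered_group le).
Variables (E : finType) (r : nat) (nu : {ffun E -> nat} -> option G).
Local Notation lb := (lebar le).
Local Notation ad := (@addbar G).
Local Notation vec := {ffun E -> nat}.
Local Notation nt := (nutilde le r nu).

Hypothesis Hex : forall a b : vec, inDelta r a -> inDelta r b -> forall s, b s < a s ->
  exists t, a t < b t /\ lb (ad (nu (upd a s t)) (nu (upd b t s))) (ad (nu a) (nu b)).

Lemma mix (PA PB : vec -> Prop) M A B A1 B1 : M <> None ->
  (forall X Y, PA X -> PB Y -> lb M (ad (nu X) (nu Y))) -> PA A -> PB B -> PA A1 -> PB B1 ->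
  lb (ad (nu A) (nu B)) M -> lb (ad (nu A1) (nu B1)) M -> lb (ad (nu A1) (nu B)) M.
Proof.
move=> hM hO pA pB pA1 pB1 h1 h2.
have nn : forall x y, lb (ad x y) M -> ad x y <> None.
  by move=> x y h hn; rewrite hn in h; apply: hM; apply: lb_NoneL h.
have [a [b [ea eb]]] := ad_None (nn _ _ h1).
have [a1 [b1 [ea1 eb1]]] := ad_None (nn _ _ h2).
have hA1A : lb (nu A1) (nu A).
  apply: (@lb_cancel _ _ HG _ _ b1); rewrite -eb1.
  apply: (lb_trans HG h2); exact: hO.
apply: (lb_trans HG _ h1); apply: lb_add => //; exact: lb_refl.
Qed.

Lemma lbN (c d A B : vec) M : inDelta r A -> inDelta r B -> vle c A -> vle d B ->
  lb (ad (nu A) (nu B)) M -> lb (ad (nt c) (nt d)) M.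
Proof.
move=> hA hB hc hd h; apply: (lb_trans HG _ h); apply: lb_add => //; exact: N1.
Qed.

Definition goal0 (c d : vec) (z : option E) M :=
  exists t, c t < d t /\ Some t <> z /\ lb (ad (nt (sp c t)) (nt (sm d t))) M.

Lemma T2 (c d : vec) (z : option E) M :
  M <> None ->
  (forall X Y, inDelta r X -> inDelta r Y -> vle c X -> vle d Y -> lb M (ad (nu X) (nu Y))) ->
  forall n w (A B : vec), dist A B < n ->
  inDelta r A -> inDelta r B -> vle c A -> vle d B ->
  (forall s, z = Some s -> A s = c s) ->
  (if w is Some t0 then absv c + 2 <= absv d /\ A t0 + d t0 <= B t0 + c t0 + 1
   else absv c < absv d) ->
  lb (ad (nu A) (nu B)) M ->
  goal0 c d z M \/
  exists s, z = Some s /\ exists A1 B1,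
    [/\ inDelta r A1, inDelta r B1, vle (sp c s) A1, vle (sm d s) B1 & lb (ad (nu A1) (nu B1)) M] /\
    (dist A1 B1 < dist A B \/ exists u, [/\ Some u <> w, u != s, B u < A u, A s < B s &
       (forall e, A1 e = A e - (e == u) + (e == s)) /\ (forall e, B1 e = B e - (e == s) + (e == u))]).
Proof.
move=> hM hO; elim=> [//|n IH] w A B hd hA hB hcA hdB hz hw hsum.
case: (boolP [exists u, (c u < A u) && (c u < d u)]) => [/existsP [u /andP [h1 h2]] | hnd].
  left; exists u; split => //; split.
    by move=> hu; have := hz u (esym hu); (clean; lia).
  apply: (lbN hA hB _ _ hsum) => e; rewrite ffunE; have := hcA e; have := hdB e; pw.
case: (boolP [exists u, [&& c u < A u, B u < A u & Some u != w]]) =>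
   [/existsP [u /and3P [h1 h2 h3]] | hnk]; last first.
  exfalso.
  have hnd' : forall e, c e < A e -> d e <= c e.
    by move=> e he; move/existsPn: hnd => /(_ e); rewrite he /= -leqNgt.
  have hnk' : forall e, c e < A e -> Some e != w -> A e <= B e.
    by move=> e he hw'; move/existsPn: hnk => /(_ e); rewrite he hw' /= andbT -leqNgt.
  have pt : forall e, Some e != w -> A e + d e <= B e + c e.
    move=> e hw'; have := hcA e; have := hdB e; case: (ltnP (c e) (A e)) => hce.
      have := hnd' e hce; have := hnk' e hce hw'; (clean; lia).
    (clean; lia).
  have rA : absv A = r by apply/eqP.
  have rB : absv B = r by apply/eqP.
  clear hnk hnk'; case: w hw pt => [t0 [hw1 hw2] | hw] pt.
    have : (\sum_e (A e + d e) <= \sum_e (B e + c e + (e == t0)))%N.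
      apply: sum_le => e; case: (eqVneq e t0) => [->|he] /=; first (clean; lia).
      rewrite addn0; apply: pt; by apply: contra he => /eqP [->].
    rewrite !big_split /= sum_eq1 -/(absv A) -/(absv B) -/(absv c) -/(absv d) rA rB; (clean; lia).
  have : (\sum_e (A e + d e) <= \sum_e (B e + c e))%N by apply: sum_le => e; exact: pt.
  rewrite !big_split /= -/(absv A) -/(absv B) -/(absv c) -/(absv d) rA rB; (clean; lia).
have [v [hv hex]] := Hex hA hB h2.
have uv : u != v by apply/eqP => huv; subst; (clean; lia).
have hA2 : inDelta r (upd A u v) by apply: inDelta_upd => //; (clean; lia).
have hB2 : inDelta r (upd B v u) by apply: inDelta_upd => //; (clean; lia).
have hs2 : lb (ad (nu (upd A u v)) (nu (upd B v u))) M := lb_trans HG hex hsum.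
case: (ltnP (c v) (d v)) => hcv.
  case: (eqVneq z (Some v)) => hzv.
    right; exists v; split => //; exists (upd A u v), (upd B v u); split.
      split => // e; rewrite !ffunE; have := hcA e; have := hdB e; have := hcA v; pw.
    right; exists u; split => //; first exact/eqP.
    by split => e; rewrite ffunE.
  left; exists v; split => //; split; first by move=> h; rewrite h eqxx in hzv.
  apply: (lbN hA2 hB2 _ _ hs2) => e; rewrite !ffunE; have := hcA e; have := hdB e; have := hcA v; pw.
set B2 := upd B v u.
have hvB2 : vle d B2 by move=> e; rewrite !ffunE; have := hcA e; have := hdB e; have := hcA v; pw.
have hvA2 : vle c (upd A u v) by move=> e; rewrite !ffunE; have := hcA e; pw.
have hsum2 : lb (ad (nu A) (nu B2)) M.
  apply: (@mix (fun X => inDelta r X /\ vle c X) (fun Y => inDelta r Y /\ vle d Y) M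
            (upd A u v) B2 A B) => //.
  by move=> X Y [? ?] [? ?]; apply: hO.
have hd2 : dist A B2 < dist A B by apply: (@dist_B_lt _ A B B2 u v) => // e; rewrite ffunE.
have hw' : absv c < absv d by case: w hw {h3} => [t0 [? ?]|] //; (clean; lia).
have := IH None A B2 _ hA hB2 hcA hvB2 hz hw' hsum2.
case; [(clean; lia) | by left | ].
move=> [s [hzs [A1 [B1 [hv1 hdd]]]]]; right; exists s; split => //; exists A1, B1; split => //; left.
case: hdd => [|[u' [_ hu's hBu' hAs [hA1 hB1]]]]; first (clean; lia).
have := dist_both_le hBu' hAs hA1 hB1; (clean; lia).
Qed.

End Main.

Section Main2.
Variables (G : zmodType) (le : rel G) (HG : ordered_group le).
Variables (E : finType) (r : nat) (nu : {ffun E -> nat} -> option G).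
Local Notation lb := (lebar le).
Local Notation ad := (@addbar G).
Local Notation vec := {ffun E -> nat}.
Local Notation nt := (nutilde le r nu).

Hypothesis Hex : forall a b : vec, inDelta r a -> inDelta r b -> forall s, b s < a s ->
  exists t, a t < b t /\ lb (ad (nu (upd a s t)) (nu (upd b t s))) (ad (nu a) (nu b)).

Definition goalE (c d : vec) (s : E) M :=
  exists t, c t < d t /\ lb (ad (nt (upd c s t)) (nt (upd d t s))) M.

Lemma goal0E (c d : vec) s M : 0 < c s ->
  goal0 le r nu (sm c s) (sp d s) (Some s) M -> goalE c d s M.
Proof.
move=> hcs [t [h1 [h2 h3]]].
have ts : t != s by apply/eqP => h; apply: h2; rewrite h.
exists t; split.
  move: h1; rewrite !ffunE; pw.
have -> : upd c s t = sp (sm c s) t by apply/ffunP => e; rewrite !ffunE.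
have -> : upd d t s = sm (sp d s) t by apply/ffunP => e; rewrite !ffunE; pw.
exact: h3.
Qed.

Lemma MAIN (c d : vec) (s : E) M : M <> None -> d s < c s -> absv c <= absv d ->
  (forall X Y, inDelta r X -> inDelta r Y -> vle c X -> vle d Y -> lb M (ad (nu X) (nu Y))) ->
  (forall X Y, inDelta r X -> inDelta r Y -> vle (sm c s) X -> vle (sp d s) Y ->
     lb M (ad (nu X) (nu Y))) ->
  forall n (A B : vec), dist A B < n -> inDelta r A -> inDelta r B -> vle c A -> vle d B ->
  lb (ad (nu A) (nu B)) M -> goalE c d s M.
Proof.
move=> hM hds hcd O1 O2; elim=> [//|n IH] A B hd hA hB hcA hdB hsum.
have mixT := @mix _ _ HG _ nu (fun X => inDelta r X /\ vle c X) (fun Y => inDelta r Y /\ vle d Y) M.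
have O1' : forall X Y, inDelta r X /\ vle c X -> inDelta r Y /\ vle d Y -> lb M (ad (nu X) (nu Y)).
  by move=> X Y [? ?] [? ?]; apply: O1.
case: (ltnP (d s) (B s)) => hBs.
  case: (boolP [exists t, (c t < d t) && (c t < A t)]) => [/existsP [t /andP [h1 h2]]|hnd].
    exists t; split => //; apply: (lbN HG hA hB _ _ hsum) => e; rewrite !ffunE.
      have := hcA e; pw.
    have := hdB e; pw.
  case: (boolP [exists u, (c u < A u) && (B u < A u)]) => [/existsP [u /andP [h1 h2]] | hnk].
    have [v [hv hex]] := Hex hA hB h2.
    have hA2 : inDelta r (upd A u v) by apply: inDelta_upd => //; clean; lia.
    have hB2 : inDelta r (upd B v u) by apply: inDelta_upd => //; clean; lia.
    have hs2 : lb (ad (nu (upd A u v)) (nu (upd B v u))) M := lb_trans HG hex hsum.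
    case: (ltnP (c v) (d v)) => hcv.
      exists v; split => //; apply: (lbN HG hA2 hB2 _ _ hs2) => e; rewrite !ffunE.
        have := hcA e; have := hcA v; pw.
      have := hdB e; pw.
    set B2 := upd B v u.
    have hvB2 : vle d B2 by move=> e; rewrite !ffunE; have := hcA e; have := hdB e; have := hcA v; pw.
    have hvA2 : vle c (upd A u v) by move=> e; rewrite !ffunE; have := hcA e; pw.
    have hsum2 : lb (ad (nu A) (nu B2)) M by apply: (mixT (upd A u v) B2 A B).
    have hd2 : dist A B2 < dist A B by apply: (@dist_B_lt _ A B B2 u v) => // e; rewrite ffunE.
    apply: (IH A B2) => //; clean; lia.
  exfalso.
  have hnd' : forall e, c e < d e -> A e <= c e.
    by move=> e he; move/existsPn: hnd => /(_ e); rewrite he /= -leqNgt.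
  have hnk' : forall e, c e < A e -> A e <= B e.
    by move=> e he; move/existsPn: hnk => /(_ e); rewrite he /= -leqNgt.
  have pt : forall e, A e + d e <= B e + c e.
    move=> e; have := hcA e; have := hdB e; case: (ltnP (c e) (A e)) => hce.
      have := hnk' e hce; case: (ltnP (c e) (d e)) => hcde; last by clean; lia.
      have := hnd' e hcde; clean; lia.
    clean; lia.
  have : A s + d s < B s + c s.
    have := hcA s; case: (ltnP (c s) (A s)) => hce; last by clean; lia.
    have := hnk' s hce; clean; lia.
  move=> hlt.
  have rA : absv A = r by apply/eqP.
  have rB : absv B = r by apply/eqP.
  have : (\sum_e (A e + d e) < \sum_e (B e + c e))%N by apply: (@sum_lt _ _ _ s).
  rewrite !big_split /= -/(absv A) -/(absv B) -/(absv c) -/(absv d) rA rB; clean; lia.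
have hAB : B s < A s by have := hcA s; clean; lia.
have [t0 [ht0 hex]] := Hex hA hB hAB.
have t0s : t0 != s by apply/eqP => h; subst; clean; lia.
have hA2 : inDelta r (upd A s t0) by apply: inDelta_upd => //; clean; lia.
have hB2 : inDelta r (upd B t0 s) by apply: inDelta_upd => //; clean; lia.
have hs2 : lb (ad (nu (upd A s t0)) (nu (upd B t0 s))) M := lb_trans HG hex hsum.
case: (ltnP (c t0) (d t0)) => hct.
  exists t0; split => //; apply: (lbN HG hA2 hB2 _ _ hs2) => e; rewrite !ffunE.
    have := hcA e; pw.
  have := hdB e; pw.
set B' := upd B t0 s.
have hvB' : vle d B' by move=> e; rewrite !ffunE; have := hcA e; have := hdB e; have := hcA t0; pw.
case: (ltnP (c s) (A s)) => hAs.
  have hvA2 : vle c (upd A s t0) by move=> e; rewrite !ffunE; have := hcA e; pw.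
  have hsum2 : lb (ad (nu A) (nu B')) M by apply: (mixT (upd A s t0) B' A B).
  have hd2 : dist A B' < dist A B by apply: (@dist_B_lt _ A B B' s t0) => // e; rewrite ffunE.
  apply: (IH A B') => //; clean; lia.
have eAs : A s = c s by have := hcA s; clean; lia.
have hcs : 0 < c s by clean; lia.
set A' := upd A s t0.
have hvA' : vle (sm c s) A' by move=> e; rewrite !ffunE; have := hcA e; pw.
have hvB'' : vle (sp d s) B' by move=> e; rewrite !ffunE; have := hcA e; have := hdB e; have := hcA t0; pw.
have hz : forall s', Some s = Some s' -> A' s' = sm c s s'.
  by move=> s' [<-]; rewrite !ffunE; pw.
have hw : absv (sm c s) + 2 <= absv (sp d s) /\ A' t0 + sp d s t0 <= B' t0 + sm c s t0 + 1.
  split; first by have := absv_sm hcs; rewrite absv_sp; clean; lia.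
  rewrite !ffunE; have := hcA t0; pw.
have := T2 HG Hex hM O2 (n := (dist A' B').+1) (w := Some t0) (ltnSn _) hA2 hB2 hvA' hvB'' hz hw hs2.
case => [hg | [s' [[<-] [A1 [B1 [[hA1 hB1 hcA1 hdB1 hsum1] hdd]]]]]].
  exact: goal0E hcs hg.
have hcA1' : vle c A1 by move=> e; have := hcA1 e; rewrite !ffunE; pw.
have hdB1' : vle d B1 by move=> e; have := hdB1 e; rewrite !ffunE; pw.
have hdAB : dist A' B' <= dist A B.
  by apply: (@dist_both_le _ A B A' B' s t0) => // e; rewrite ffunE.
case: hdd => [hlt | [u [hu hus hBu hAs' [fA1 fB1]]]].
  apply: (IH A1 B1) => //; clean; lia.
have ut0 : u != t0 by apply/eqP => h; apply: hu; rewrite h.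
have hsum3 : lb (ad (nu A1) (nu B)) M by apply: (mixT A B A1 B1).
have hBuA : B u < A u by move: hBu; rewrite !ffunE; pw.
have hd3 : dist A1 B < dist A B.
  apply: (@dist_A_lt _ A B A1 u t0) => // e; rewrite fA1 !ffunE; have := hcA e; pw.
apply: (IH A1 B) => //; clean; lia.
Qed.

End Main2.

Lemma exT (E : finType) (c d : {ffun E -> nat}) s :
  absv c <= absv d -> d s < c s -> exists t, c t < d t.
Proof.
move=> h1 h2; case: (boolP [exists t, c t < d t]) => [/existsP [t ht]|hn]; first by exists t.
exfalso; have : absv d < absv c.
  apply: (@sum_lt _ _ _ s) => // e; move/existsPn: hn => /(_ e); rewrite -leqNgt.
  by [].
by clean; lia.
Qed.

Lemma exT0 (E : finType) (c d : {ffun E -> nat}) :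
  absv c < absv d -> exists t, c t < d t.
Proof.
move=> h1; case: (boolP [exists t, c t < d t]) => [/existsP [t ht]|hn]; first by exists t.
exfalso; have : absv d <= absv c.
  apply: sum_le => e; move/existsPn: hn => /(_ e); rewrite -leqNgt; by [].
by clean; lia.
Qed.

Section Main3.
Variables (G : zmodType) (le : rel G) (HG : ordered_group le).
Variables (E : finType) (r : nat) (nu : {ffun E -> nat} -> option G).
Local Notation lb := (lebar le).
Local Notation ad := (@addbar G).
Local Notation vec := {ffun E -> nat}.
Local Notation nt := (nutilde le r nu).

Hypothesis Hex : forall a b : vec, inDelta r a -> inDelta r b -> forall s, b s < a s ->
  exists t, a t < b t /\ lb (ad (nu (upd a s t)) (nu (upd b t s))) (ad (nu a) (nu b)).

Lemma optpair (c d : vec) : ad (nt c) (nt d) <> None ->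
  exists A B, [/\ inDelta r A, inDelta r B, vle c A, vle d B & lb (ad (nu A) (nu B)) (ad (nt c) (nt d))].
Proof.
move=> /ad_None [a [b [ea eb]]].
have [A [hA hcA hlA]] := @N2 _ _ HG _ r nu c (ltac:(by rewrite ea)).
have [B [hB hdB hlB]] := @N2 _ _ HG _ r nu d (ltac:(by rewrite eb)).
exists A, B; split => //; exact: (lb_add HG hlA hlB).
Qed.

Lemma OO (c d : vec) X Y : inDelta r X -> inDelta r Y -> vle c X -> vle d Y ->
  lb (ad (nt c) (nt d)) (ad (nu X) (nu Y)).
Proof. move=> hX hY hc hd; apply: (lb_add HG); [exact: (N1 HG nu hX hc) | exact: (N1 HG nu hY hd)]. Qed.

Lemma topE (c d : vec) s : d s < c s -> absv c <= absv d -> goalE le r nu c d s (ad (nt c) (nt d)).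
Proof.
move=> hds hcd.
case hV: (ad (nt c) (nt d)) => [v|]; last first.
  have [t ht] := exT hcd hds; exists t; split => //; exact: lb_None.
rewrite -hV.
have hVn : ad (nt c) (nt d) <> None by rewrite hV.
set W := ad (nt (sm c s)) (nt (sp d s)).
case: (boolP (lb (ad (nt c) (nt d)) W)) => hVW.
  have [A [B [hA hB hcA hdB hs]]] := optpair hVn.
  apply: (MAIN HG Hex hVn hds hcd _ _ (n := (dist A B).+1) (ltnSn _) hA hB hcA hdB hs).
    by move=> X Y *; apply: OO.
  move=> X Y *; apply: (lb_trans HG hVW); exact: OO.
have hWV : lb W (ad (nt c) (nt d)).
  by case: (lb_total HG W (ad (nt c) (nt d))) => // h; rewrite h in hVW.
have hWn : W <> None by move=> h; rewrite h lb_None in hVW.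
have [A [B [hA hB hcA hdB hs]]] := optpair hWn.
have hcs : 0 < c s by clean; lia.
have hdB' : vle d B by move=> e; have := hdB e; rewrite ffunE; clean; lia.
have hz : forall s', Some s = Some s' -> A s' = sm c s s'.
  move=> s' [<-]; apply/eqP; rewrite eqn_leq hcA andbT ffunE eqxx /=.
  rewrite leqNgt; apply/negP => hlt.
  have hcA' : vle c A by move=> e; have := hcA e; rewrite !ffunE; pw.
  move/negP: hVW; apply; apply: (lb_trans HG _ hs); exact: OO.
have hw : absv (sm c s) < absv (sp d s) by have := absv_sm hcs; rewrite absv_sp; clean; lia.
have := T2 HG Hex hWn (fun X Y hX hY hx hy => OO hX hY hx hy) (n := (dist A B).+1) (w := None)
          (ltnSn _) hA hB hcA hdB hz hw hs.
case => [hg | [s' [[<-] [A1 [B1 [[hA1 hB1 hcA1 hdB1 hsum1] _]]]]]].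
  have [t [h1 h2]] := goal0E hcs hg; exists t; split => //; apply: (lb_trans HG h2); exact: hWV.
exfalso; move/negP: hVW; apply; apply: (lb_trans HG _ hsum1); apply: OO => // e.
  by have := hcA1 e; rewrite !ffunE; pw.
by have := hdB1 e; rewrite !ffunE; pw.
Qed.

Lemma top0 (c d : vec) : absv c < absv d -> goal0 le r nu c d None (ad (nt c) (nt d)).
Proof.
move=> hcd.
case hV: (ad (nt c) (nt d)) => [v|]; last first.
  have [t ht] := exT0 hcd; exists t; split => //; split => //; exact: lb_None.
rewrite -hV.
have hVn : ad (nt c) (nt d) <> None by rewrite hV.
have [A [B [hA hB hcA hdB hs]]] := optpair hVn.
have := T2 HG Hex (z := None) hVn (fun X Y hX hY hx hy => OO hX hY hx hy) (n := (dist A B).+1) (w := None)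
          (ltnSn _) hA hB hcA hdB (fun s h => ltac:(congruence)) hcd hs.
by case => // [[s' [hs' _]]].
Qed.

Lemma topBig (c d : vec) s : d s < c s -> absv d < absv c ->
  goalE le r nu c d s (ad (nt c) (nt d)) \/ lb (ad (nt (sm c s)) (nt (sp d s))) (ad (nt c) (nt d)).
Proof.
move=> hds hcd.
case hV: (ad (nt c) (nt d)) => [v|]; last by right; exact: lb_None.
rewrite -hV.
have hVn : ad (nt c) (nt d) <> None by rewrite hV.
have [A [B [hA hB hcA hdB hs]]] := optpair hVn.
case: (ltnP (d s) (B s)) => hBs.
  right; apply: (lbN HG hA hB _ _ hs) => e; rewrite ffunE.
    by have := hcA e; clean; lia.
  by have := hdB e; pw.
have hAB : B s < A s by have := hcA s; clean; lia.
have [t [ht hex]] := Hex hA hB hAB.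
have hA2 : inDelta r (upd A s t) by apply: inDelta_upd => //; clean; lia.
have hB2 : inDelta r (upd B t s) by apply: inDelta_upd => //; clean; lia.
have hs2 := lb_trans HG hex hs.
case: (ltnP (c t) (d t)) => hct.
  left; exists t; split => //; apply: (lbN HG hA2 hB2 _ _ hs2) => e; rewrite !ffunE.
    by have := hcA e; pw.
  by have := hdB e; pw.
right; apply: (lbN HG hA2 hB2 _ _ hs2) => e; rewrite !ffunE.
  by have := hcA e; pw.
by have := hdB e; have := hcA t; pw.
Qed.

End Main3.

Lemma arith1 (a b c d : nat) : a + c = b + d -> b < a -> c < d.
Proof. lia. Qed.
Lemma arith2 (a b c d : nat) : a + c = b + d -> d < c -> a < b.
Proof. lia. Qed.

Theorem proposition1p3 (G : zmodType) (le : rel G) (HG : ordered_group le)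
    (E Q : finType) (r : nat) (nu : {ffun E -> nat} -> option G) :
  Mconvex le r nu ->
  Mconvex le r (@nu_ext G le Q E r nu).
Proof.
move=> [[a [ha hna]] hex].
have Hex : forall a b : {ffun E -> nat}, inDelta r a -> inDelta r b -> forall s, (b s < a s)%N ->
  exists t, (a t < b t)%N /\ lebar le (addbar (nu (upd a s t)) (nu (upd b t s))) (addbar (nu a) (nu b)).
  exact: hex.
have sumQE : forall x : {ffun (Q + E)%type -> nat},
    absv x = (\sum_q x (inl q) + absv [ffun e => x (inr e)])%N.
  by move=> x; rewrite /absv big_sumType; congr addn; apply: eq_bigr => e _; rewrite ffunE.
split.
  pose x0 : {ffun (Q + E)%type -> nat} := [ffun z => match z with inl _ => 0%N | inr e => a e end].
  have hx0 : [ffun e => x0 (inr e)] = a by apply/ffunP => e; rewrite !ffunE.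
  exists x0; split.
    by rewrite /inDelta sumQE big1 => [|q _]; rewrite ?hx0 ?ffunE.
  rewrite /nu_ext hx0.
  move=> hn; have := N1 HG nu ha (c := a) (fun e => leqnn _); rewrite hn.
  by case: (nu a) hna.
move=> x y hx hy s hs.
set c := [ffun e => x (inr e)]; set d := [ffun e => y (inr e)].
have rx : absv x = r by apply/eqP.
have ry : absv y = r by apply/eqP.
have sx := sumQE x; have sy := sumQE y.
rewrite -/c in sx; rewrite -/d in sy.
rewrite /nu_ext -/c -/d.
case: s hs => [q0|s0] hs.
  case: (boolP [exists q, x (inl q) < y (inl q)]) => [/existsP [q hq] | hnq].
    exists (inl q); split => //.
    have -> : [ffun e => [ffun z => x z - (z == inl q0) + (z == inl q)]%N (inr e)] = c.
      by apply/ffunP => e; rewrite !ffunE /= subn0 addn0.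
    have -> : [ffun e => [ffun z => y z - (z == inl q) + (z == inl q0)]%N (inr e)] = d.
      by apply/ffunP => e; rewrite !ffunE /= subn0 addn0.
    exact: lb_refl.
  have hcd : absv c < absv d.
    apply: (@arith1 (\sum_q x (inl q)) (\sum_q y (inl q)) _ _).
      by rewrite -sx -sy rx ry.
    apply: (@sum_lt _ _ _ q0) => // q; move/existsPn: hnq => /(_ q); rewrite -leqNgt; by [].
  have [t [h1 [_ h3]]] := top0 HG Hex hcd.
  exists (inr t); split; first by move: h1; rewrite !ffunE.
  have -> : [ffun e => [ffun z => x z - (z == inl q0) + (z == inr t)]%N (inr e)] = sp c t.
    by apply/ffunP => e; rewrite !ffunE /= subn0.
  have -> : [ffun e => [ffun z => y z - (z == inr t) + (z == inl q0)]%N (inr e)] = sm d t.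
    by apply/ffunP => e; rewrite !ffunE /= addn0.
  exact: h3.
have hds : d s0 < c s0 by rewrite !ffunE.
have Eupd : forall (w : {ffun (Q + E)%type -> nat}) s t,
   [ffun e => [ffun z => w z - (z == inr s) + (z == inr t)]%N (inr e)] =
   upd [ffun e => w (inr e)] s t.
  by move=> w s' t; apply/ffunP => e; rewrite !ffunE.
case: (leqP (absv c) (absv d)) => hcd.
  have [t [h1 h2]] := topE HG Hex hds hcd.
  exists (inr t); split; first by move: h1; rewrite !ffunE.
  by rewrite !Eupd -/c -/d.
case: (topBig HG Hex hds hcd) => [[t [h1 h2]] | hsh].
  exists (inr t); split; first by move: h1; rewrite !ffunE.
  by rewrite !Eupd -/c -/d.
have : exists q, x (inl q) < y (inl q).
  case: (boolP [exists q, x (inl q) < y (inl q)]) => [/existsP [q hq]|hnq]; first by exists q.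
  have : (\sum_q y (inl q) <= \sum_q x (inl q))%N.
    apply: sum_le => q; move/existsPn: hnq => /(_ q); rewrite -leqNgt; by [].
  move=> hle; exfalso.
  have := @arith2 (\sum_q x (inl q)) (\sum_q y (inl q)) (absv c) (absv d).
  rewrite -sx -sy rx ry => /(_ erefl hcd); by rewrite ltnNge hle.
move=> [q hq]; exists (inl q); split => //.
have -> : [ffun e => [ffun z => x z - (z == inr s0) + (z == inl q)]%N (inr e)] = sm c s0.
  by apply/ffunP => e; rewrite !ffunE /= addn0.
have -> : [ffun e => [ffun z => y z - (z == inl q) + (z == inr s0)]%N (inr e)] = sp d s0.
  by apply/ffunP => e; rewrite !ffunE /= subn0.
exact: hsh.
Qed.
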